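(* Consider the strategic usage dynamics described in the context, satisfying assumptions (A1)–(A4). If the state $(H^t,A^t)$ is zero-loss at time $t$, then the state $(H^\tau,A^\tau)$ is zero-loss for all times $\tau\ge t$.
   Context: Setting. There are $n\ge 1$ users and $m\ge 1$ services. User $i\in\{1,\dots,n\}$ has fixed features $x_i\in\mathcal X$ and a fixed label $y_i\in\{+1,-1\}$. $\mathcal H$ is a set of classifiers $h:\mathcal X\to\{+1,-1\}$. There is a utility $u:\mathcal X\times\mathcal H\to\mathbb R$ (written $u(x,h)$) and a loss $\ell:\mathcal H\times\mathcal X\times\{+1,-1\}\to\mathbb R$ satisfying: (A1) for any $h_1,h_2\in\mathcal H$ and $x\in\mathcal X$ with $h_1(x)=-1$ and $h_2(x)=+1$, we have $u(x,h_1)\le 0<u(x,h_2)$; (A2) for all $h\in\mathcal H$ the loss is non-negative, $-y\,\ell(h,x,y)$ is strictly monotonically increasing with $u(x,h)$, and there exists $v>0$ such that $u(x,h)=0$ implies $\ell(h,x,y)=v$; (A3) (realizability) there is $h\in\mathcal H$ with $\ell(h,x_i,y_i)=0$ for all $i=1,\dots,n$. Dynamics. Fix $q>1$ and a memory parameter $p\ge 0$. A state at time $t$ is $(H^t,A^t)$ with $H^t=(h^t_1,\dots,h^t_m)\in\mathcal H^m$ and usage matrix $A^t\in\mathbb R_+^{n\times m}$. Given classifiers $H$, a user best response is any $A\in\arg\max_{A\in\mathbb R_+^{n\times m}}\sum_{i=1}^n\big[\sum_{j=1}^m A_{ij}u(x_i,h_j)-\frac1q(\sum_{j=1}^m A_{ij})^q\big]$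 (any tie-breaking). Memory: $M^{-1}=0$ and $M^t=\frac{A^t}{1+p}+\frac{pM^{t-1}}{1+p}$ for $t\ge0$. For a memory matrix $M^t$ define $L^t(H)=\sum_{j=1}^m\sum_{i=1}^n\frac{M^t_{ij}}{\sum_{k=1}^n M^t_{kj}}\ell(h_j,x_i,y_i)$, with the fraction taken to be $0$ when $\sum_k M^t_{kj}=0$. The service update is sticky: $H^{t+1}\in\arg\min_{H\in\mathcal H^m}L^t(H)$, and whenever $L^{t-1}(H^t)=L^t(H^t)$ we have $H^{t+1}=H^t$. (A4) $H^0\in\mathcal H^m$ is arbitrary; for every $t\ge0$, $A^t$ is a user best response to $H^t$, and $H^{t+1}$ is obtained from $M^t$ by the sticky service update. Zero-loss. A state $(H,A)$ is zero-loss if every service $j$ satisfies: (1) $A_{ij}\ell(h_j,x_i,y_i)=0$ for all $i$, and (2) $u(x_i,h_j)\le 0$ for all $i$ with $y_i=-1$. *)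

(* Defs.v *)
From HB Require Import structures.
From mathcomp Require Import all_boot all_order all_algebra.
From mathcomp Require Import reals exp.
Set Implicit Arguments. Unset Strict Implicit. Unset Printing Implicit Defensive.
Import Order.TTheory GRing.Theory Num.Theory.
Local Open Scope ring_scope.

Section Dyn.
Variables (R : realType) (X : Type).
(* Classifiers h : X -> {+1,-1}; +1 is encoded by true, -1 by false. *)
Definition classifier := X -> bool.
Definition sgn (b : bool) : R := if b then 1 else -1.

Variables (n m : nat) (x : 'I_n -> X) (y : 'I_n -> bool).
Variables (u : X -> classifier -> R) (ell : classifier -> X -> bool -> R).

Definition user_obj (q : R) (Hc : 'I_m -> classifier) (A : 'M[R]_(n, m)) : R :=
  \sum_(i < n) (\sum_(j < m) A i j * u (x i) (Hc j)
                - q^-1 * powR (\sum_(j < m) A i j) q).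

Definition nonneg_mx (A : 'M[R]_(n, m)) := forall i j, 0 <= A i j.

Definition best_response (q : R) (Hc : 'I_m -> classifier) (A : 'M[R]_(n, m)) :=
  nonneg_mx A /\
  forall A' : 'M[R]_(n, m), nonneg_mx A' -> user_obj q Hc A' <= user_obj q Hc A.

(* memo p A k = M^(k-1):  memo 0 = M^{-1} = 0,
   memo (t+1) = M^t = A^t/(1+p) + p M^{t-1}/(1+p). *)
Fixpoint memo (p : R) (A : nat -> 'M[R]_(n, m)) (k : nat) : 'M[R]_(n, m) :=
  match k with
  | 0 => 0
  | k'.+1 => (1 + p)^-1 *: A k' + (p / (1 + p)) *: memo p A k'
  end.

Definition Lfun (M : 'M[R]_(n, m)) (Hc : 'I_m -> classifier) : R :=
  \sum_(j < m) \sum_(i < n)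
     (if \sum_(k < n) M k j == 0 then 0 else M i j / \sum_(k < n) M k j)
     * ell (Hc j) (x i) (y i).

Definition zero_loss (Hc : 'I_m -> classifier) (A : 'M[R]_(n, m)) :=
  forall j : 'I_m,
    (forall i, A i j * ell (Hc j) (x i) (y i) = 0) /\
    (forall i, y i = false -> u (x i) (Hc j) <= 0).
End Dyn.

(* Main.v *)
Require Import Defs.
From HB Require Import structures.
From mathcomp Require Import all_boot all_order all_algebra.
From mathcomp Require Import reals exp.
From mathcomp Require Import ring lra.
Import Order.TTheory GRing.Theory Num.Theory.
Local Open Scope ring_scope.
Set Implicit Arguments. Unset Strict Implicit.
Section L.
Variables (R : realType) (X : Type) (n m : nat) (x : 'I_n -> X) (y : 'I_n -> bool).
Variable (ell : classifier X -> X -> bool -> R).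

Lemma L_zero_of (M : 'M[R]_(n, m)) Hc :
  (forall i j, M i j * ell (Hc j) (x i) (y i) = 0) -> Lfun x y ell M Hc = 0.
Proof.
move=> HM; rewrite /Lfun big1 // => j _; rewrite big1 // => i _.
case: ifP => _; first by rewrite mul0r.
by rewrite mulrAC HM mul0r.
Qed.

Lemma zero_of_L (M : 'M[R]_(n, m)) Hc :
  nonneg_mx M -> (forall j i, 0 <= ell (Hc j) (x i) (y i)) ->
  Lfun x y ell M Hc = 0 -> forall i j, M i j * ell (Hc j) (x i) (y i) = 0.
Proof.
move=> HM He HL i j.
have Hc0 : forall j i, 0 <= (if \sum_(k < n) M k j == 0 then 0 else M i j / \sum_(k < n) M k j)
     * ell (Hc j) (x i) (y i).
  move=> j' i'; apply: mulr_ge0 => //; case: ifP => // _.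
  by apply: divr_ge0 => //; apply: sumr_ge0.
have Hj : forall j, \sum_(i < n) (if \sum_(k < n) M k j == 0 then 0 else M i j / \sum_(k < n) M k j)
     * ell (Hc j) (x i) (y i) = 0.
  by move=> j'; apply: (psumr_eq0P (fun j _ => sumr_ge0 _ (fun i _ => Hc0 j i)) HL).
have := psumr_eq0P (fun i _ => Hc0 j i) (Hj j) (i := i) isT.
case: ifP => [/eqP S0 _| /negbT S0].
  by rewrite (psumr_eq0P (fun k _ => HM k j) S0 (i := i) isT) mul0r.
by rewrite mulrAC => /eqP; rewrite mulf_eq0 invr_eq0 (negbTE S0) orbF => /eqP.
Qed.

Lemma L_ge0 (M : 'M[R]_(n, m)) Hc :
  nonneg_mx M -> (forall j i, 0 <= ell (Hc j) (x i) (y i)) -> 0 <= Lfun x y ell M Hc.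
Proof.
move=> HM He; apply: sumr_ge0 => j _; apply: sumr_ge0 => i _.
apply: mulr_ge0 => //; case: ifP => // _.
by apply: divr_ge0 => //; apply: sumr_ge0.
Qed.
End L.
Section BR.
Variables (R : realType) (X : Type) (n m : nat) (x : 'I_n -> X).
Variables (u : X -> classifier X -> R) (q : R) (Hc : 'I_m -> classifier X).
Hypothesis Hq : 1 < q.

Definition rowterm (A : 'M[R]_(n, m)) i :=
  \sum_(j < m) A i j * u (x i) (Hc j) - q^-1 * powR (\sum_(j < m) A i j) q.

Lemma obj_lt (A A' : 'M[R]_(n, m)) i :
  (forall i', i' != i -> forall j, A' i' j = A i' j) ->
  rowterm A i < rowterm A' i -> user_obj x u q Hc A < user_obj x u q Hc A'.
Proof.
move=> Heq Hlt; rewrite /user_obj (bigD1 i) //= [X in _ < X](bigD1 i) //=.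
have -> : \sum_(i0 < n | i0 != i) (\sum_(j < m) A' i0 j * u (x i0) (Hc j) -
           q^-1 * powR (\sum_(j < m) A' i0 j) q) =
          \sum_(i0 < n | i0 != i) (\sum_(j < m) A i0 j * u (x i0) (Hc j) -
           q^-1 * powR (\sum_(j < m) A i0 j) q).
  apply: eq_bigr => i0 Hi0; congr (_ - _ * _).
    by apply: eq_bigr => j _; rewrite Heq.
  by congr (powR _ _); apply: eq_bigr => j _; rewrite Heq.
by rewrite ltrD2r.
Qed.

Lemma sum_delta (f : 'I_m -> R) k : \sum_(j < m) (j == k)%:R * f j = f k.
Proof.
rewrite (bigD1 k) //= eqxx mul1r big1 ?addr0 // => j /negbTE ->.
by rewrite mul0r.
Qed.

Definition pert (A : 'M[R]_(n, m)) i k j b a : 'M[R]_(n, m) :=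
  \matrix_(i', j') (A i' j' + (i' == i)%:R * ((j' == k)%:R * b - (j' == j)%:R * a)).

Lemma sum_pert (f g : 'I_m -> R) k j b a :
  \sum_(j' < m) (f j' + ((j' == k)%:R * b - (j' == j)%:R * a)) * g j' =
  \sum_(j' < m) f j' * g j' + b * g k - a * g j.
Proof.
under eq_bigr => j' _ do rewrite mulrDl mulrBl -!mulrA.
by rewrite big_split /= sumrB !sum_delta addrA.
Qed.

Lemma rowterm_pert A i k j b a :
  rowterm (pert A i k j b a) i =
  (\sum_(j' < m) A i j' * u (x i) (Hc j') + b * u (x i) (Hc k) - a * u (x i) (Hc j))
  - q^-1 * powR (\sum_(j' < m) A i j' + b - a) q.
Proof.
rewrite /rowterm.
under eq_bigr => j' _ do rewrite /pert mxE eqxx mul1r.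
under [X in powR X _]eq_bigr => j' _ do rewrite /pert mxE eqxx mul1r.
rewrite sum_pert; congr (_ - _ * powR _ _).
by rewrite big_split /= sumrB !(sum_delta (fun _ => _)) addrA.
Qed.

Lemma pert_other A i k j b a i' j' : i' != i -> pert A i k j b a i' j' = A i' j'.
Proof. by move=> /negbTE H; rewrite /pert mxE H mul0r addr0. Qed.

Lemma pert_nonneg A i k j b a : nonneg_mx A -> 0 <= b -> a <= A i j ->
  nonneg_mx (pert A i k j b a).
Proof.
move=> HA Hb Ha i' j'; rewrite /pert mxE.
have [->|_] := eqVneq i' i; last by rewrite mul0r addr0.
rewrite mul1r addrA.
have H1 : 0 <= A i j' + (j' == k)%:R * b by apply: addr_ge0 => //; apply: mulr_ge0.
have [->|_] := eqVneq j' j; last by rewrite mul0r subr0.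
rewrite mul1r subr_ge0; apply: le_trans Ha _.
by rewrite lerDl mulr_ge0.
Qed.

Lemma br_contra A i (A' : 'M[R]_(n, m)) :
  best_response x u q Hc A -> nonneg_mx A' ->
  (forall i', i' != i -> forall j, A' i' j = A i' j) ->
  rowterm A i < rowterm A' i -> False.
Proof.
move=> [_ Hbr] HA' Heq Hlt.
have := @obj_lt A A' i Heq Hlt; rewrite ltNge => /negP; apply; exact: Hbr.
Qed.

Lemma br_argmax A i j k : best_response x u q Hc A -> 0 < A i j ->
  u (x i) (Hc k) <= u (x i) (Hc j).
Proof.
move=> Hbr Ha; rewrite leNgt; apply/negP => Hlt.
apply: (@br_contra A i (pert A i k j (A i j) (A i j)) Hbr).
- by apply: pert_nonneg => //; [case: Hbr | exact: ltW].
- by move=> i' Hi' j'; apply: pert_other.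
rewrite rowterm_pert addrK /rowterm.
have : 0 < A i j * u (x i) (Hc k) - A i j * u (x i) (Hc j).
  by rewrite -mulrBr mulr_gt0 // subr_gt0.
lra.
Qed.

Lemma br_pos A i j : best_response x u q Hc A -> 0 < A i j -> 0 < u (x i) (Hc j).
Proof.
move=> Hbr Ha; rewrite ltNge; apply/negP => Hle.
have HA : nonneg_mx A by case: Hbr.
apply: (@br_contra A i (pert A i j j 0 (A i j)) Hbr).
- by apply: pert_nonneg.
- by move=> i' Hi' j'; apply: pert_other.
rewrite rowterm_pert addr0 mul0r addr0 /rowterm.
have HS : A i j <= \sum_(j' < m) A i j'.
  by rewrite (bigD1 j) //= lerDl sumr_ge0.
have Hp : powR (\sum_(j' < m) A i j' - A i j) q < powR (\sum_(j' < m) A i j') q.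
  apply: gt0_ltr_powR; first exact: lt_trans ltr01 Hq.
  - by rewrite nnegrE subr_ge0.
  - by rewrite nnegrE; have := HA i j; lra.
  - by rewrite ltrBlDr ltrDl.
have Hc0 : 0 < q^-1 by rewrite invr_gt0; exact: lt_trans ltr01 Hq.
have : q^-1 * powR (\sum_(j' < m) A i j' - A i j) q < q^-1 * powR (\sum_(j' < m) A i j') q.
  by rewrite ltr_pM2l.
have : 0 <= - (A i j * u (x i) (Hc j)).
  by rewrite oppr_ge0 mulr_ge0_le0 // ltW.
lra.
Qed.

Lemma br_active A i j : best_response x u q Hc A -> 0 < u (x i) (Hc j) ->
  exists k, 0 < A i k.
Proof.
move=> Hbr Hu.
have HA : nonneg_mx A by case: Hbr.
have [/existsP//|Hall] := boolP [exists k, 0 < A i k].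
exfalso.
have H0 : forall k, A i k = 0.
  move=> k; apply/eqP; move: Hall; rewrite negb_exists => /forallP /(_ k).
  by rewrite lt_def (HA i k) andbT negbK.
have Hq0 : 0 < q by exact: lt_trans ltr01 Hq.
have Hq1 : 0 < q - 1 by rewrite subr_gt0.
set cc := q * u (x i) (Hc j) / 2.
have Hcc : 0 < cc by rewrite /cc divr_gt0 // mulr_gt0.
set eps := powR cc (q - 1)^-1.
have He : 0 < eps by rewrite /eps powR_gt0.
have Hpe : powR eps q = eps * cc.
  rewrite -(mulr_powRB1 (ltW He) Hq0); congr (_ * _).
  by rewrite /eps -powRrM mulVf ?gt_eqF // powRr1 // ltW.
apply: (@br_contra A i (pert A i j j eps 0) Hbr).
- by apply: pert_nonneg => //; rewrite ?H0 // ltW.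
- by move=> i' Hi' j'; apply: pert_other.
rewrite rowterm_pert /rowterm.
rewrite big1; last by move=> k _; rewrite H0 mul0r.
rewrite big1; last by move=> k _; rewrite H0.
rewrite powR0 ?gt_eqF // mulr0 !subr0 !add0r Hpe.
have -> : q^-1 * (eps * cc) = eps * u (x i) (Hc j) / 2 by rewrite /cc; field; rewrite gt_eqF.
have : 0 < eps * u (x i) (Hc j) by rewrite mulr_gt0.
lra.
Qed.
End BR.
Unset Implicit Arguments.
Theorem proposition2 (R : realType) (X : Type) (Hs : classifier X -> Prop)
  (u : X -> classifier X -> R) (ell : classifier X -> X -> bool -> R)
  (n m : nat) (x : 'I_n -> X) (y : 'I_n -> bool) (q p : R)
  (Hn : (0 < n)%N) (Hm : (0 < m)%N) (Hq : 1 < q) (Hp : 0 <= p)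
  (* (A1) *)
  (A1 : forall h1 h2 (xx : X), Hs h1 -> Hs h2 -> h1 xx = false -> h2 xx = true ->
          u xx h1 <= 0 /\ 0 < u xx h2)
  (* (A2) non-negativity *)
  (A2a : forall h xx yy, Hs h -> 0 <= ell h xx yy)
  (* (A2) -y*ell(h,x,y) is a strictly increasing function of u(x,h) over h in H *)
  (A2b : forall h1 h2 xx yy, Hs h1 -> Hs h2 ->
          (u xx h1 < u xx h2 -> - sgn R yy * ell h1 xx yy < - sgn R yy * ell h2 xx yy) /\
          (u xx h1 = u xx h2 -> ell h1 xx yy = ell h2 xx yy))
  (A2c : exists v : R, 0 < v /\
          forall h xx yy, Hs h -> u xx h = 0 -> ell h xx yy = v)
  (* (A3) realizability *)
  (A3 : exists h, Hs h /\ forall i : 'I_n, ell h (x i) (y i) = 0)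
  (* (A4) dynamics *)
  (H : nat -> 'I_m -> classifier X) (A : nat -> 'M[R]_(n, m))
  (H0 : forall j, Hs (H 0%N j))
  (HA : forall t, best_response x u q (H t) (A t))
  (Hmin : forall t, (forall j, Hs (H t.+1 j)) /\
          forall H' : 'I_m -> classifier X, (forall j, Hs (H' j)) ->
            Lfun x y ell (memo p A t.+1) (H t.+1) <= Lfun x y ell (memo p A t.+1) H')
  (Hsticky : forall t, Lfun x y ell (memo p A t) (H t) = Lfun x y ell (memo p A t.+1) (H t) ->
             H t.+1 = H t)
  (t : nat) (Hz : zero_loss x y u ell (H t) (A t)) :
  forall tau : nat, (t <= tau)%N -> zero_loss x y u ell (H tau) (A tau).
Proof.
have HsA : forall tau j, Hs (H tau j).
  by case=> [|k] j; [exact: H0 | exact: (Hmin k).1].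
have Hell : forall tau j i, 0 <= ell (H tau j) (x i) (y i).
  by move=> tau j i; apply: A2a; apply: HsA.
have Hmemo : forall tau, nonneg_mx (memo p A tau).
  elim=> [|k IH] i j /=; first by rewrite mxE.
  have Hp1 : 0 < 1 + p by lra.
  rewrite !mxE; apply: addr_ge0; apply: mulr_ge0.
  - by rewrite invr_ge0 ltW.
  - by case: (HA k) => + _; apply.
  - by rewrite divr_ge0 // ltW.
  - exact: IH.
have L0 : forall tau, Lfun x y ell (memo p A tau) (H tau) = 0.
  case=> [|k].
    by apply: L_zero_of => i j /=; rewrite mxE mul0r.
  case: A3 => h [Hh Hh0].
  apply/eqP; rewrite eq_le; apply/andP; split.
    have -> : 0 = Lfun x y ell (memo p A k.+1) (fun _ => h).
      by apply/esym/L_zero_of => i j; rewrite Hh0 mulr0.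
    by apply: (Hmin k).2.
  by apply: L_ge0.
have step : forall tau, zero_loss x y u ell (H tau) (A tau) ->
    zero_loss x y u ell (H tau.+1) (A tau.+1).
  move=> tau Hz1.
  have HH : H tau.+1 = H tau.
    apply: Hsticky; rewrite L0; apply/esym/L_zero_of => i j /=.
    rewrite !mxE mulrDl -!mulrA.
    have := zero_of_L (Hmemo tau) (Hell tau) (L0 tau) i j => ->.
    by rewrite (Hz1 j).1 !mulr0 addr0.
  rewrite HH => j; split; last exact: (Hz1 j).2.
  move=> i.
  have Hnn : 0 <= A tau.+1 i j by case: (HA tau.+1) => + _; apply.
  move: Hnn; rewrite le_eqVlt => /orP [/eqP <-|Hpos]; first by rewrite mul0r.
  have Hbr1 := HA tau.+1; rewrite HH in Hbr1.
  have Hu := br_pos Hq Hbr1 Hpos.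
  have [k Hk] := br_active Hq (HA tau) Hu.
  have Hek : ell (H tau k) (x i) (y i) = 0.
    have /eqP := (Hz1 k).1 i; rewrite mulf_eq0 gt_eqF //= => /eqP.
    done.
  have Hue : u (x i) (H tau j) = u (x i) (H tau k).
    apply/eqP; rewrite eq_le; apply/andP; split.
      exact: br_argmax (HA tau) Hk.
    exact: br_argmax Hbr1 Hpos.
  by rewrite ((A2b _ _ _ (y i) (HsA tau j) (HsA tau k)).2 Hue) Hek mulr0.
move=> tau /subnK <-; elim: (tau - t)%N => [|d IH]; first by rewrite add0n.
by rewrite addSn; apply: step.
Qed.
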